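(* Let $y$ be a single real variable and $x=(x_1,\dots,x_n)$ real variables, and let $f(x,y)\in\mathbb R[x,y]$. Assume that for every $y_0\in\mathbb R$ the specialized polynomial $f(\cdot,y_0)\in\mathbb R[x]$ is a square in $\mathbb R[x]$. Then there exist $g(y)\in\mathbb R[y]$ and $h(x,y)\in\mathbb R[x,y]$ such that \[ f(x,y)=g(y)\,h(x,y)^2. \] *)

(* Defs.v *)
From HB Require Import structures.
From mathcomp Require Import all_boot all_order all_algebra.
From mathcomp Require Import reals.
From mathcomp Require Import mpoly.
Set Implicit Arguments. Unset Strict Implicit. Unset Printing Implicit Defensive.

(* Main.v *)
Require Import Defs.
From HB Require Import structures.
From mathcomp Require Import all_boot all_order all_algebra all_field.
From mathcomp Require Import reals.
From mathcomp Require Import mpoly.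
From mathcomp Require Import complex.
From mathcomp Require Import ring zify.
Import Order.TTheory GRing.Theory Num.Theory.
Local Open Scope ring_scope.

Lemma horner_mcoeff (B : comNzRingType) n (p : {poly {mpoly B[n]}}) (c : B) m :
  (p.[c%:MP])@_m = (map_poly (mcoeff m) p).[c].
Proof.
rewrite horner_coef (@horner_coef_wide _ (size p)); last exact: size_poly.
rewrite raddf_sum; apply: eq_bigr => i _.
by rewrite -rmorphXn mulrC /= mcoeffCM coef_map /= mulrC.
Qed.

Lemma natnonroot (B : idomainType) (p : {poly B}) :
  injective (fun i : nat => (i%:R : B)) -> p != 0 -> exists i : nat, p.[i%:R] != 0.
Proof.
move=> inj nz.
case: (boolP (has (fun i : nat => p.[i%:R] != 0) (iota 0 (size p)))).
  by case/hasP => i _ h; exists i.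
move/hasPn => h.
have : (size [seq (i%:R : B) | i <- iota 0 (size p)] < size p)%N.
  apply: max_poly_roots nz _ _.
    by apply/allP => x /mapP [i /h /negPn hi ->].
  by rewrite map_inj_uniq ?iota_uniq.
by rewrite size_map size_iota ltnn.
Qed.

Lemma natroots0 (B : idomainType) (p : {poly B}) :
  injective (fun i : nat => (i%:R : B)) ->
  (forall i : nat, p.[i%:R] = 0) -> p = 0.
Proof.
move=> inj h; apply/eqP; apply: contraT => nz.
have := max_poly_roots (rs := [seq (i%:R : B) | i <- iota 0 (size p)]) nz.
rewrite size_map size_iota ltnn; apply.
  by apply/allP => x /mapP [i _ ->]; apply/rootP.
by rewrite map_inj_uniq ?iota_uniq.
Qed.

Lemma monic_div (B : comNzRingType) (B2 : nzRingType) (ev : {poly B} -> B2)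
  (evD : {morph ev : x y / x + y}) (evM : {morph ev : x y / x * y})
  (p P : {poly B}) : p \is monic -> ev p = 0 -> ev P = 0 ->
  (forall r : {poly B}, (size r < size p)%N -> ev r = 0 -> r = 0) ->
  P = Pdiv.CommonRing.rdivp P p * p.
Proof.
move=> mon ep eP inj.
have E := Pdiv.RingMonic.rdivp_eq mon P.
have : ev (Pdiv.CommonRing.rmodp P p) = 0.
  by move: (congr1 ev E); rewrite evD evM ep mulr0 add0r eP.
move/(inj _ (Pdiv.CommonRing.ltn_rmodpN0 _ (monic_neq0 mon))) => r0.
by rewrite {1}E r0 addr0.
Qed.
Arguments monic_div {B B2 ev} evD evM {p P}.

Section Main.
Variable (R : realType) (n : nat).
Local Notation A := {mpoly R[n]}.
Local Notation C := (complex R).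
Local Notation AC := {mpoly C[n]}.

Definition up (g : {poly R}) : {poly A} := map_poly (@mpolyC n R) g.

Lemma upM a b : up (a * b) = up a * up b. Proof. exact: rmorphM. Qed.
Lemma upC c : up c%:P = (c%:MP)%:P. Proof. exact: map_polyC. Qed.
Lemma up_eq0 a : (up a == 0) = (a == 0). Proof. exact: map_poly_eq0. Qed.
Lemma size_up a : size (up a) = size a. Proof. exact: size_map_poly. Qed.
Lemma up_monic a : (up a \is monic) = (a \is monic). Proof. exact: map_monic. Qed.

Definition rc := real_complex R.
Definition evR (z : C) (d : {poly R}) : C := (map_poly rc d).[z].
Definition evA (z : C) (P : {poly A}) : AC :=
  (map_poly (map_mpoly rc) P).[z%:MP].

Lemma evR_D z : {morph evR z : x y / x + y}.
Proof. by move=> x y; rewrite /evR rmorphD hornerD. Qed.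
Lemma evR_M z : {morph evR z : x y / x * y}.
Proof. by move=> x y; rewrite /evR rmorphM hornerM. Qed.
Lemma evA_D z : {morph evA z : x y / x + y}.
Proof. by move=> x y; rewrite /evA rmorphD hornerD. Qed.
Lemma evA_M z : {morph evA z : x y / x * y}.
Proof. by move=> x y; rewrite /evA rmorphM hornerM. Qed.
Lemma evA_X z x k : evA z (x ^+ k) = (evA z x) ^+ k.
Proof. by rewrite /evA rmorphXn horner_exp. Qed.

Lemma evA_up z d : evA z (up d) = (evR z d)%:MP.
Proof.
rewrite /evA /up /evR -map_poly_comp.
rewrite (eq_map_poly (g := (@mpolyC n C) \o rc)); last first.
  by move=> x /=; rewrite map_mpolyC.
by rewrite map_poly_comp horner_map.
Qed.

Lemma evA_coef z P m : (evA z P)@_m = evR z (map_poly (mcoeff m) P).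
Proof.
rewrite /evA horner_mcoeff /evR -!map_poly_comp; congr (_.[_]).
by apply: eq_map_poly => x /=; rewrite mcoeff_map_mpoly.
Qed.

Lemma inj_transfer z k :
  (forall r : {poly R}, (size r < k)%N -> evR z r = 0 -> r = 0) ->
  (forall r : {poly A}, (size r < k)%N -> evA z r = 0 -> r = 0).
Proof.
move=> h r sr er.
have rm m : map_poly (mcoeff m) r = 0.
  apply: h; first exact: leq_ltn_trans (size_poly _ _) sr.
  by rewrite -evA_coef er mcoeff0.
apply/polyP => i; apply/mpolyP => m.
by have := congr1 (fun q : {poly R} => q`_i) (rm m); rewrite coef_map /= !coef0 mcoeff0.
Qed.

Lemma reduce (f : {poly A}) d e S z p : p \is monic -> evR z p = 0 ->
  (forall r : {poly R}, (size r < size p)%N -> evR z r = 0 -> r = 0) ->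
  (1 < size p)%N -> evR z d = 0 -> d != 0 -> f * up d = up e * S ^+ 2 ->
  exists (d' e' : {poly R}) (S' : {poly A}),
    [/\ d' != 0, (size d' < size d)%N & f * up d' = up e' * S' ^+ 2].
Proof.
move=> mon ep injR sp ed nzd E.
have Ed := monic_div (evR_D z) (evR_M z) mon ep ed injR.
set d1 := Pdiv.CommonRing.rdivp d p in Ed.
have nzp := monic_neq0 mon.
have nzd1 : d1 != 0 by apply: contraNneq nzd; rewrite Ed => ->; rewrite mul0r.
have sd1 : (size d1 < size d)%N.
  rewrite Ed size_mul //; move: sp; case: (size p) => // k; case: k => // k _.
  by rewrite addnS /= addnS ltnS leq_addr.
have nzup : up p != 0 by rewrite up_eq0.
have E2 : f * up d = up e * (S * S) by rewrite E expr2.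
have ud0 : evA z (up d) = 0 by rewrite evA_up ed mpolyC0.
have H : (evR z e)%:MP * (evA z S * evA z S) = 0.
  have := congr1 (evA z) E2; rewrite !evA_M ud0 evA_up => <-.
  exact: mulr0.
move/eqP: H; rewrite !mulf_eq0 mpolyC_eq0 orbb => /orP [ee|eS].
  have Ee := monic_div (evR_D z) (evR_M z) mon ep (eqP ee) injR.
  set e1 := Pdiv.CommonRing.rdivp e p in Ee.
  exists d1, e1, S; split => //.
  apply: (mulIf nzup); rewrite -mulrA -upM -Ed E Ee upM; ring.
have injA := @inj_transfer z _ injR.
rewrite -size_up in injA.
have ES := monic_div (evA_D z) (evA_M z) (p := up p) (P := S).
rewrite up_monic evA_up ep mpolyC0 in ES.
have {ES} ES := ES mon erefl (eqP eS) injA.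
set S1 := Pdiv.CommonRing.rdivp S (up p) in ES.
exists d1, (e * p), S1; split => //.
apply: (mulIf nzup); rewrite -mulrA -upM -Ed E ES upM; ring.
Qed.




Lemma up1 : up 1 = 1. Proof. exact: rmorph1. Qed.

Lemma evR_C z c : evR z c%:P = rc c.
Proof. by rewrite /evR map_polyC hornerC. Qed.

Lemma lin_case z : complex.Im z = 0 ->
  let p := 'X - (complex.Re z)%:P in
  [/\ p \is monic, evR z p = 0, (1 < size p)%N &
    forall r : {poly R}, (size r < size p)%N -> evR z r = 0 -> r = 0].
Proof.
move=> Iz p; split.
- exact: monicXsubC.
- rewrite /evR /p rmorphB /= map_polyX map_polyC /= !hornerE.
  by clear p; move: Iz; case: z => a b /= ->; rewrite subrr.
- by rewrite size_XsubC.
move=> r; rewrite size_XsubC ltnS => /size1_polyC ->; rewrite evR_C.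
by rewrite /rc /real_complex_def => -[->].
Qed.

Lemma quad_case z : complex.Im z != 0 ->
  let p := ('X - (complex.Re z)%:P) ^+ 2 + ((complex.Im z) ^+ 2)%:P in
  [/\ p \is monic, evR z p = 0, (1 < size p)%N &
    forall r : {poly R}, (size r < size p)%N -> evR z r = 0 -> r = 0].
Proof.
move=> Iz p.
have sp : size p = 3.
  by rewrite /p size_addl size_exp_XsubC // (leq_ltn_trans (size_polyC_leq1 _)).
have Ez := complexE z.
split.
- rewrite monicE /p lead_coefDl; last first.
    by rewrite size_exp_XsubC (leq_ltn_trans (size_polyC_leq1 _)).
  by have := monic_exp 2 (monicXsubC (complex.Re z)); rewrite monicE.
- rewrite /evR /p rmorphD rmorphXn rmorphB /= map_polyX !map_polyC /= !hornerE.
  rewrite rmorphXn /= {1}Ez.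
  have -> : forall a b i : C, (a + i * b - a) ^+ 2 + b ^+ 2 = b ^+ 2 * (i ^+ 2 + 1).
    by move=> a b i; ring.
  by rewrite sqr_i addNr mulr0.
- by rewrite sp.
move=> r; rewrite sp ltnS => sr.
rewrite /evR (horner_coef_wide _ (leq_trans (size_poly _ _) sr)).
rewrite !big_ord_recl big_ord0 addr0 /= !coef_map /= expr0 mulr1 expr1.
rewrite {1}Ez.
have -> : rc r`_0 + rc r`_1 * (rc (complex.Re z) + 'i%C * rc (complex.Im z)) =
   rc (r`_0 + r`_1 * complex.Re z) + 'i%C * rc (r`_1 * complex.Im z).
  rewrite /rc !rmorphD !rmorphM /=; ring.
rewrite -[X in X = 0 -> _](complexE (Complex _ _)) => -[h0 h1].
have r1 : r`_1 = 0 by move: h1 => /eqP; rewrite mulf_eq0 (negbTE Iz) orbF => /eqP.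
have h0' : r`_0 + r`_1 * complex.Re z = 0 := h0.
rewrite r1 mul0r addr0 in h0'.
apply/polyP => i; rewrite coef0; case: i => [//|[//|i]].
by rewrite nth_default // (leq_trans sr).
Qed.

Lemma step2 (f : {poly A}) k : forall (d e : {poly R}) (S : {poly A}), (size d <= k)%N -> d != 0 ->
  f * up d = up e * S ^+ 2 -> exists g h, f = up g * h ^+ 2.
Proof.
elim: k => [|k IH] d e S sd nzd E.
  by move: sd; rewrite leqn0 size_poly_eq0 (negbTE nzd).
case: (leqP (size d) 1) => sd1.
  have Ed := size1_polyC sd1; set c := d`_0 in Ed.
  have nzc : c != 0 by apply: contraNneq nzd; rewrite Ed => ->.
  exists (c^-1%:P * e), S.
  rewrite upM -mulrA -E Ed mulrCA -upM -polyCM mulVf // up1 mulr1 //.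
have : size (map_poly rc d) != 1.
  by rewrite size_map_poly; move: sd1; case: (size d) => [|[]].
case/closed_rootP => z /rootP rz.
have edz : evR z d = 0 by exact: rz.
have red p : p \is monic -> evR z p = 0 -> (1 < size p)%N ->
    (forall r : {poly R}, (size r < size p)%N -> evR z r = 0 -> r = 0) ->
    exists g h, f = up g * h ^+ 2.
  move=> mon ep sp injR.
  have [d' [e' [S' [nz' sd' E']]]] := @reduce f d e S z p mon ep injR sp edz nzd E.
  by apply: (IH d' e' S') => //; rewrite -ltnS (leq_trans sd').
case: (eqVneq (complex.Im z) 0) => Iz.
  by have [] := @lin_case z Iz; apply: red.
by have [] := @quad_case z Iz; apply: red.
Qed.


Lemma mlead_eq (p : A) M : p@_M != 0 -> (forall m, (M < m)%O -> p@_m = 0) ->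
  mlead p = M.
Proof.
move=> nz gt; apply/le_anti/andP; split.
  rewrite leNgt; apply/negP => /gt; apply/eqP.
  by rewrite mleadc_eq0; apply: contraNneq nz => ->; rewrite mcoeff0.
by apply: msupp_le_mlead; rewrite mcoeff_msupp.
Qed.

Lemma join_attained (T : eqType) (r : seq T) (P : pred T) (F : T -> 'X_{1..n}) :
  has P r -> exists2 x, (x \in r) && P x & (\join_(i <- r | P i) F i)%O = F x.
Proof.
elim: r => [//|x r IH] /=; rewrite big_cons.
case Px: (P x) => /=.
  case Hr: (has P r).
    have [y /andP [yr Py] ->] := IH Hr.
    case: (leP (F x) (F y)) => h.
      by exists y; rewrite ?inE ?yr ?Py ?orbT // join_r.
    by exists x; rewrite ?inE ?eqxx ?Px // join_l // ltW.
  exists x; rewrite ?inE ?eqxx ?Px //.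
  rewrite big_seq_cond big_pred0 ?joinx0 // => i; apply/negP => /andP [ir Pi].
  by move/negbT: Hr => /hasPn /(_ i ir); rewrite Pi.
move=> /IH [y /andP [yr Py] E]; exists y => //.
by rewrite inE yr orbT.
Qed.

Lemma mnm2_inj (m1 m2 : 'X_{1..n}) : (m1 *+ 2)%MM = (m2 *+ 2)%MM -> m1 = m2.
Proof.
move/mnmP => h; apply/mnmP => i; have := h i; rewrite !mulmnE.
by move/eqP; rewrite eqn_mul2r /= => /eqP.
Qed.


Section Step1.
Variable f : {poly A}.
Hypothesis nzf : f != 0.
Hypothesis hsq : forall y0 : R, exists q : A, f.[y0%:MP] = q ^+ 2.

Definition cm m : {poly R} := map_poly (mcoeff m) f.
Lemma Fcoef y0 m : (f.[y0%:MP])@_m = (cm m).[y0].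
Proof. exact: horner_mcoeff. Qed.

Definition M := (\join_(i <- iota 0 (size f) | f`_i != 0) mlead f`_i)%O.

Lemma M_gt m : (M < m)%O -> cm m = 0.
Proof.
move=> lt; apply/polyP => i; rewrite coef_map /= coef0.
case: (eqVneq f`_i 0) => [->|nz]; first by rewrite mcoeff0.
have ir : i \in iota 0 (size f).
  rewrite mem_iota /= add0n; case: (ltnP i (size f)) => // h.
  by move: nz; rewrite nth_default // eqxx.
apply: mcoeff_gt_mlead; apply: le_lt_trans lt.
exact: (joins_sup_seq (fun i => mlead f`_i) ir nz).
Qed.

Lemma M_att : exists2 i, f`_i != 0 & mlead f`_i = M.
Proof.
have : has (fun i => f`_i != 0) (iota 0 (size f)).
  apply/hasP; exists (size f).-1.
    rewrite mem_iota /= add0n prednK ?leqnn // lt0n size_poly_eq0 //.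
  by rewrite -lead_coefE lead_coef_eq0.
case/(@join_attained nat _ _ (fun i => mlead f`_i)) => i /andP [_ nz] E.
by exists i.
Qed.

Definition cM := cm M.

Lemma cM_neq0 : cM != 0.
Proof.
have [i nz E] := M_att; apply/eqP => /(congr1 (fun q : {poly R} => q`_i)).
rewrite coef_map /= coef0 -E => /eqP; rewrite mleadc_eq0 (negbTE nz).
by [].
Qed.

Lemma mleadF y0 : cM.[y0] != 0 -> mlead (f.[y0%:MP]) = M.
Proof.
move=> h; apply: mlead_eq; first by rewrite Fcoef.
by move=> m /M_gt; rewrite Fcoef => ->; rewrite horner0.
Qed.

Lemma sqrt_lead y0 q : cM.[y0] != 0 -> f.[y0%:MP] = q ^+ 2 ->
  (mlead q *+ 2)%MM = M /\ mleadc q ^+ 2 = cM.[y0].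
Proof.
move=> h E.
have q0 : q != 0.
  by apply: contraNneq h => q0; rewrite -Fcoef E q0 expr0n /= mcoeff0.
have reg : GRing.lreg (mleadc q) by apply: mulfI; rewrite mleadc_eq0.
have E1 := mleadX_proper 2 reg.
split; first by rewrite -E1 -E mleadF.
by rewrite -mleadcX -E Fcoef -E1 -E mleadF.
Qed.

Section WithN.
Variable N : 'X_{1..n}.
Hypothesis MN : M = (N + N)%MM.

Definition good y0 (s : A) : Prop :=
  [/\ cM.[y0] != 0, cM.[y0] *: s ^+ 2 = f.[y0%:MP], s@_N = 1 &
      forall k, (N < k)%O -> s@_k = 0].

Lemma good_ex y0 : cM.[y0] != 0 -> exists s, good y0 s.
Proof.
move=> h; have [q Eq] := hsq y0.
have [E1 E2] := @sqrt_lead y0 q h Eq.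
have lq : mlead q = N.
  apply: mnm2_inj; rewrite E1 MN; apply/mnmP => i.
  by rewrite [LHS]mnmDE [RHS]mulmnE muln2 addnn.
have l0 : mleadc q != 0 by apply: contraNneq h => l0; rewrite -E2 l0 expr0n.
exists ((mleadc q)^-1 *: q); split => //.
- by rewrite exprZn scalerA -E2 -exprMn mulfV // expr1n scale1r Eq.
- by rewrite mcoeffZ -lq mulVf.
- by move=> k; rewrite -lq => /mcoeff_gt_mlead; rewrite mcoeffZ => ->; rewrite mulr0.
Qed.


Definition ratA (F : R -> A -> R) : Prop :=
  exists (j : nat) (T : {poly R}),
    forall y0 s, good y0 s -> cM.[y0] ^+ j * F y0 s = T.[y0].

Lemma ratA_ext F G : ratA F -> (forall y0 s, good y0 s -> F y0 s = G y0 s) ->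
  ratA G.
Proof. by move=> [j [T h]] e; exists j, T => y0 s g; rewrite -e // h. Qed.
Arguments ratA_ext {F G}.

Lemma ratA_poly P : ratA (fun y0 _ => P.[y0]).
Proof. by exists 0%N, P => y0 s _; rewrite expr0 mul1r. Qed.

Lemma ratA_div P : ratA (fun y0 _ => P.[y0] / cM.[y0]).
Proof.
by exists 1%N, P => y0 s [h _ _ _]; rewrite expr1 mulrC divfK.
Qed.

Lemma ratA_add F G : ratA F -> ratA G -> ratA (fun y s => F y s + G y s).
Proof.
move=> [j1 [T1 h1]] [j2 [T2 h2]].
exists (j1 + j2)%N, (T1 * cM ^+ j2 + T2 * cM ^+ j1) => y0 s g.
rewrite hornerD !hornerM !horner_exp -(h1 y0 s g) -(h2 y0 s g) exprD; ring.
Qed.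

Lemma ratA_mul F G : ratA F -> ratA G -> ratA (fun y s => F y s * G y s).
Proof.
move=> [j1 [T1 h1]] [j2 [T2 h2]].
exists (j1 + j2)%N, (T1 * T2) => y0 s g.
rewrite hornerM -(h1 y0 s g) -(h2 y0 s g) exprD; ring.
Qed.

Arguments ratA_add {F G}.
Arguments ratA_mul {F G}.
Lemma ratA_opp F : ratA F -> ratA (fun y s => - F y s).
Proof.
by move=> [j [T h]]; exists j, (- T) => y0 s g; rewrite hornerN -(h y0 s g) mulrN.
Qed.

Arguments ratA_opp {F}.
Lemma ratA_zero : ratA (fun _ _ => 0).
Proof. by apply: ratA_ext (ratA_poly 0) _ => y0 s _; rewrite horner0. Qed.

Lemma ratA_sum (I : Type) (r : seq I) (P : pred I) (G : I -> R -> A -> R) :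
  (forall i, P i -> ratA (G i)) ->
  ratA (fun y s => \sum_(i <- r | P i) G i y s).
Proof.
move=> h; elim: r => [|x r IH].
  by apply: ratA_ext ratA_zero _ => y0 s _; rewrite big_nil.
case Px: (P x).
  by apply: ratA_ext (ratA_add (h x Px) IH) _ => y0 s _; rewrite big_cons Px.
by apply: ratA_ext IH _ => y0 s _; rewrite big_cons Px.
Qed.

Lemma sum_lt m k1 k2 : (N + m)%MM = (k1 + k2)%MM -> (k1 < m)%O -> (N < k2)%O.
Proof.
move=> e lt; rewrite ltNge; apply/negP => le.
have := lemc_lt_add le lt; rewrite addmC -e ltxx.
by [].
Qed.

Lemma rec_step m : (forall k, (m < k)%O -> ratA (fun _ s => s@_k)) ->
  ratA (fun _ s => s@_m).
Proof.
move=> IH; case: (ltgtP m N) => [mN|Nm|->]; first last.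
- by apply: ratA_ext (ratA_poly 1) _ => y0 s [_ _ -> _]; rewrite hornerC.
- by apply: ratA_ext ratA_zero _ => y0 s [_ _ _ h]; rewrite h.
pose D := (mdeg (N + m)%MM).+1.
pose u (s : A) := s - s@_m *: 'X_[m].
have uk s k : (u s)@_k = s@_k - s@_m * (m == k)%:R.
  by rewrite /u mcoeffB mcoeffZ mcoeffX.
pose term (k : 'X_{1..n < D, D}) (y0 : R) (s : A) := (u s)@_k.1 * (u s)@_k.2.
have key y0 s : good y0 s -> s@_m = ((cm (N + m)%MM).[y0] / cM.[y0] -
    \sum_(k : 'X_{1..n < D, D} | (N + m)%MM == (k.1 + k.2)%MM) term k y0 s) / 2.
  move=> [h E sN sgt].
  have U : ((u s) ^+ 2)@_(N + m) =
      \sum_(k : 'X_{1..n < D, D} | (N + m)%MM == (k.1 + k.2)%MM) term k y0 s.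
    by rewrite expr2 mcoeffM.
  have su : s = u s + s@_m *: 'X_[m] by rewrite /u subrK.
  have S2 : (s ^+ 2)@_(N + m) = ((u s) ^+ 2)@_(N + m) + 2 * s@_m.
    rewrite {1}su sqrrD mcoeffD mcoeffD mcoeffMn -scalerAr mcoeffZ.
    rewrite addmC mcoeffMX uk exprZn mcoeffZ mcoeffXn.
    have -> : ((m *+ 2)%MM == (m + N)%MM) = false.
      have mm : (m *+ 2)%MM = (m + m)%MM.
        by apply/mnmP => i; rewrite [LHS]mulmnE [RHS]mnmDE muln2 addnn.
      by rewrite mm eqm_add2l (lt_eqF mN).
    rewrite (lt_eqF mN) sN mulr0 subr0 mulr1 mulr0 addr0.
    by rewrite mulr_natl.
  have F1 := congr1 (mcoeff (N + m)%MM) E.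
  rewrite /= mcoeffZ Fcoef S2 U in F1; rewrite -F1.
  have h2 : (2 : R) != 0 by rewrite pnatr_eq0.
  by field.
have rt (k : 'X_{1..n < D, D}) : (N + m)%MM == (k.1 + k.2)%MM -> ratA (term k).
  move/eqP=> hk.
  case: (eqVneq m k.1) => [e1|n1].
    by apply: ratA_ext ratA_zero _ => y0 s _; rewrite /term uk -e1 eqxx mulr1 subrr mul0r.
  case: (eqVneq m k.2) => [e2|n2].
    by apply: ratA_ext ratA_zero _ => y0 s _; rewrite /term (uk _ k.2) -e2 eqxx mulr1 subrr mulr0.
  have tE y0 s : term k y0 s = s@_k.1 * s@_k.2.
    by rewrite /term !uk (negbTE n1) (negbTE n2) !mulr0 !subr0.
  case: (ltP m (bmnm k.1)) => l1; last first.
    have k1m : (bmnm k.1 < m)%O by rewrite lt_neqAle eq_sym n1.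
    have := @sum_lt m _ _ hk k1m => k2N.
    by apply: ratA_ext ratA_zero _ => y0 s [_ _ _ h]; rewrite tE (h (bmnm k.2)) // mulr0.
  case: (ltP m (bmnm k.2)) => l2; last first.
    have k2m : (bmnm k.2 < m)%O by rewrite lt_neqAle eq_sym n2.
    have hk' : (N + m)%MM = (bmnm k.2 + bmnm k.1)%MM by rewrite hk addmC.
    have := @sum_lt m _ _ hk' k2m => k1N.
    by apply: ratA_ext ratA_zero _ => y0 s [_ _ _ h]; rewrite tE (h (bmnm k.1)) // mul0r.
  by apply: ratA_ext (ratA_mul (IH _ l1) (IH _ l2)) _ => y0 s _; rewrite tE.
apply: ratA_ext (ratA_mul (ratA_add (ratA_div (cm (N + m)%MM))
    (ratA_opp (@ratA_sum _ _ _ _ rt))) (ratA_poly (2^-1)%:P)) _.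
by move=> y0 s g; rewrite hornerC (key _ _ g).
Qed.


Definition D0 := (mdeg N).+1.
Definition mu (m : 'X_{1..n}) := #|[pred k : 'X_{1..n < D0} | (m < bmnm k)%O]|.

Lemma all_coef m : ratA (fun _ s => s@_m).
Proof.
suff H : forall c m, (mu m < c)%N -> ratA (fun _ s => s@_m) by exact: (H (mu m).+1).
elim=> [//|c IH] m' hm; apply: rec_step => k mk.
case: (ltnP (mdeg N) (mdeg k)) => hk.
  apply: ratA_ext ratA_zero _ => y0 s [_ _ _ h].
  by rewrite h // lt_mdeg_ltmc.
pose kb := @BMultinom n D0 k hk.
apply: IH; rewrite ltnS in hm; apply: leq_trans _ hm; rewrite /mu.
apply: proper_card; rewrite properE; apply/andP; split.
  by apply/subsetP => x; rewrite !inE => kx; exact: lt_trans mk kx.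
by apply/subsetPn; exists kb; rewrite !inE /= ?ltxx.
Qed.

Lemma good_msize y0 s : good y0 s -> (msize s <= D0)%N.
Proof.
move=> [_ _ sN sgt].
have s0 : s != 0 by apply: contra_eq_neq sN => ->; rewrite mcoeff0 eq_sym oner_neq0.
have ls : mlead s = N by apply: mlead_eq => //; rewrite sN oner_neq0.
by rewrite -mlead_deg // ls.
Qed.

Lemma ratV : exists (j : nat) (S : {poly A}),
  forall y0 s, good y0 s -> cM.[y0] ^+ j *: s = S.[y0%:MP].
Proof.
have H' : forall k : 'X_{1..n < D0}, exists jT : nat * {poly R},
    forall y0 s, good y0 s -> cM.[y0] ^+ jT.1 * s@_k = jT.2.[y0].
  by move=> k; have [j [T h]] := all_coef k; exists (j, T).
have [g hg] := fin_all_exists H'.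
pose J := (\max_(k : 'X_{1..n < D0}) (g k).1)%N.
exists J, (\sum_(k : 'X_{1..n < D0})
   up ((g k).2 * cM ^+ (J - (g k).1)) * ('X_[bmnm k])%:P).
move=> y0 s gd.
rewrite {1}(mpolywE (@good_msize y0 s gd)) scaler_sumr horner_sum.
apply: eq_bigr => k _.
rewrite hornerM hornerC /up horner_map /= mul_mpolyC scalerA hornerM horner_exp.
congr (_ *: _).
have Jk : ((g k).1 <= J)%N by rewrite /J; exact: (@leq_bigmax _ (fun k => (g k).1) k).
by rewrite -{1}(subnK Jk) exprD -mulrA (hg k _ _ gd) mulrC.
Qed.

End WithN.

Lemma nat_injA : injective (fun i : nat => (i%:R : A)).
Proof.
move=> i j /= /eqP; rewrite -!mpolyC_nat mpolyC_eq eqr_nat => /eqP.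
by [].
Qed.

Lemma nat_injR : injective (fun i : nat => (i%:R : R)).
Proof. by move=> i j /= /eqP; rewrite eqr_nat => /eqP. Qed.

Lemma step1 : exists (d : {poly R}) (S : {poly A}),
  d != 0 /\ f * up d = up 1 * S ^+ 2.
Proof.
have [i hi] := natnonroot _ _ nat_injR cM_neq0.
have [q1 Eq1] := hsq i%:R.
have [E1 _] := @sqrt_lead i%:R q1 hi Eq1.
have MN : M = (mlead q1 + mlead q1)%MM.
  rewrite -E1; apply/mnmP => k.
  by rewrite [LHS]mulmnE [RHS]mnmDE muln2 addnn.
have [j [S hS]] := ratV (mlead q1).
exists (cM ^+ (j.*2.+1)), (up cM * S); split.
  by rewrite expf_neq0 // cM_neq0.
rewrite up1 mul1r.
pose P := (up cM * S) ^+ 2 - f * up (cM ^+ (j.*2.+1)).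
have P0 : P * up cM = 0.
  apply: (natroots0 _ _ nat_injA) => k.
  rewrite -mpolyC_nat hornerM /up horner_map -/(up cM) /=.
  case: (eqVneq cM.[k%:R] 0) => [->|nz]; first by rewrite mpolyC0 mulr0.
  have [s gs] := @good_ex _ MN _ nz.
  have [_ Es _ _] := gs.
  rewrite /P hornerD hornerN (horner_exp (up cM * S)) hornerM hornerM /up.
  rewrite !horner_map /= -(hS _ _ gs) -Es -!mul_mpolyC !rmorphXn /=.
  rewrite (horner_exp cM) rmorphXn (exprS _ j.*2) -addnn exprD; ring.
have : P == 0.
  by move/eqP: P0; rewrite mulf_eq0 up_eq0 (negbTE cM_neq0) orbF.
by rewrite subr_eq0 => /eqP ->.
Qed.
End Step1.
End Main.

Theorem lemma4p3 (R : realType) (n : nat) (f : {poly {mpoly R[n]}}) :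
  (forall y0 : R, exists q : {mpoly R[n]}, f.[y0%:MP] = q ^+ 2) ->
  exists (g : {poly R}) (h : {poly {mpoly R[n]}}),
    f = map_poly (fun c : R => c%:MP) g * h ^+ 2.
Proof.
move=> hsq; case: (eqVneq f 0) => [->|nzf].
  by exists 0, 0; rewrite map_poly0 mul0r.
have [d [S [nzd E]]] := @step1 R n f nzf hsq.
have [g [h Eh]] := @step2 R n f (size d) d 1 S (leqnn _) nzd E.
by exists g, h.
Qed.
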